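(* Let $\varepsilon>0$ and $q\in(0,1)$, and fix a real number $\sigma$. Then there exist constants $C>0$ and $V_0>0$, depending only on $\varepsilon$, $q$ and $\sigma$, such that for every real $v$ with $|v|\ge V_0$ for which $s=\sigma+iv$ satisfies $\inf_{r\in\mathbb{Z}_{\ge -1}}|1-q^{r+s}|>\varepsilon$, we have $$|\zeta_q(s)|\le \begin{cases} C & (\sigma>1),\\ C\,|v| & (\sigma=1),\\ C\exp\left(-(\sigma-1)(1+\pi/2)\,|v|\right) & (\sigma<1).\end{cases}$$
   Context: For $q\in(0,1)$ and a positive integer $m$, the $q$-integer is $[m]_q=\frac{1-q^m}{1-q}$, and $q^{w}=e^{w\log q}$ for complex $w$. The two-variable $q$-zeta function is $\zeta_q(s,t)=\sum_{m=1}^\infty \frac{q^{mt}}{[m]_q^s}$, absolutely convergent for $s\in\mathbb{C}$, $\Re(t)>0$, and meromorphically continued to $\mathbb{C}^2$ (simple poles at $t\in\{a+2\pi i b/\log q: a,b\in\mathbb{Z}, a\le0\}$). The $q$-analogue of the Riemann zeta function is $\zeta_q(s)=\zeta_q(s,s-1)$ (via this continuation). *)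

(* Defs.v *)
From Stdlib Require Import Reals ZArith.
From Coquelicot Require Import Coquelicot.
Open Scope R_scope.

(* q^w := e^{w log q} for real q > 0 and complex w, written out in real terms:
   e^{(a+ib) log q} = q^a (cos(b log q) + i sin(b log q)). *)
Definition qpow (q : R) (w : C) : C :=
  (Rpower q (Re w) * cos (Im w * ln q), Rpower q (Re w) * sin (Im w * ln q)).

(* generalized binomial coefficient binom(s+k-1, k) = s(s+1)...(s+k-1)/k! *)
Fixpoint binomC (s : C) (k : nat) : C :=
  match k with
  | O => 1%C
  | S k' => (binomC s k' * (s + RtoC (INR k')) / RtoC (INR k' + 1))%C
  end.

Definition CSeries (a : nat -> C) : C :=
  (Series (fun k => Re (a k)), Series (fun k => Im (a k))).

(* Meromorphic continuation of zeta_q(s,t) = sum_{m>=1} q^{mt} / [m]_q^s,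
   given by the (everywhere valid, off the poles) expansion
   zeta_q(s,t) = (1-q)^s sum_{k>=0} binom(s+k-1,k) q^{t+k} / (1 - q^{t+k}),
   obtained by expanding [m]_q^{-s} = (1-q)^s (1-q^m)^{-s} binomially. *)
Definition zeta_q2 (q : R) (s t : C) : C :=
  (qpow (1 - q) s *
   CSeries (fun k => binomC s k * qpow q (t + RtoC (INR k))
                     / (1 - qpow q (t + RtoC (INR k)))))%C.

Definition zeta_q (q : R) (s : C) : C := zeta_q2 q s (s - 1)%C.

(* Main.v *)
Require Import Defs.
From Stdlib Require Import Reals ZArith Lra Lia.
From Coquelicot Require Import Coquelicot.
Open Scope R_scope.

Definition E (sg v u : R) : C :=
  (exp (sg * ln (1 - u)) * cos (v * ln (1 - u)), exp (sg * ln (1 - u)) * sin (v * ln (1 - u))).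

Lemma deriv_base (sg v : R) (g : C) (n : nat) (u : R) : u < 1 ->
 is_derive (fun u => Re (g * E sg v u * RtoC (u^n))%C) u
   (Re (g * E sg v u * RtoC (/(1-u)) * (RtoC (INR n * u^pred n) - ((sg,v) + RtoC (INR n)) * RtoC (u^n)))%C).
Proof.
  intros Hu. destruct g as [g1 g2].
  apply is_derive_ext with (f := fun u => (g1 * exp (sg * ln (1 - u)) * cos (v * ln (1 - u)) - g2 * exp (sg * ln (1 - u)) * sin (v * ln (1 - u))) * u ^ n).
  { intros t. unfold E, RtoC; simpl. ring. }
  auto_derive.
  - lra.
  - unfold E, RtoC; simpl. replace (1 + - u) with (1 - u) by ring.
    destruct n as [|n]; simpl; field; lra.
Qed.

Fixpoint csum (f : nat -> C) (n : nat) : C :=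
  match n with O => RtoC 0 | S n => (csum f n + f n)%C end.
Definition Tj (s : C) (n0 j : nat) (x : R) : C :=
  csum (fun i => binomC s (n0+i) * RtoC (x^(n0+i)))%C j.
Definition Dj (s : C) (n0 j : nat) (u : R) : C :=
  (RtoC (INR n0 * u^pred n0) * binomC s n0
   - RtoC (INR (n0+j) * u^pred (n0+j)) * binomC s (n0+j))%C.

Lemma deriv_T (sg v : R) (al : C) n0 j u : u < 1 ->
  is_derive (fun u => Re (al * (E sg v u * Tj (sg,v) n0 j u))%C) u
    (Re (al * E sg v u * RtoC (/(1-u)) * Dj (sg,v) n0 j u)%C).
Proof.
  intros Hu. induction j as [|j IH].
  - apply is_derive_ext with (f := fun _ => 0).
    { intros t. unfold Tj; cbn [csum]. rewrite Cmult_0_r, Cmult_0_r. reflexivity. }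
    replace (Re (al * E sg v u * RtoC (/ (1 - u)) * Dj (sg, v) n0 0 u)%C) with 0.
    { auto_derive; auto. }
    unfold Dj. rewrite Nat.add_0_r.
    replace (RtoC (INR n0 * u ^ Init.Nat.pred n0) * binomC (sg, v) n0 -
        RtoC (INR n0 * u ^ Init.Nat.pred n0) * binomC (sg, v) n0)%C with (RtoC 0) by ring.
    rewrite Cmult_0_r. reflexivity.
  - set (n := (n0 + j)%nat).
    apply is_derive_ext with (f := fun u => Re (al * (E sg v u * Tj (sg,v) n0 j u))%C
       + Re ((al * binomC (sg,v) n) * E sg v u * RtoC (u^n))%C).
    { intros t. unfold Tj; cbn [csum]. fold n. rewrite <- re_plus. f_equal. ring. }
    assert (Hd := is_derive_plus _ _ _ _ _ IH (deriv_base sg v (al * binomC (sg,v) n) n u Hu)).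
    match type of Hd with is_derive _ _ ?l => replace (Re (al * E sg v u * RtoC (/(1-u)) * Dj (sg,v) n0 (S j) u)%C) with l end.
    { exact Hd. }
    change (plus ?a ?b) with (a + b). rewrite <- re_plus. f_equal.
    unfold Dj. rewrite Nat.add_succ_r. fold n. simpl pred. rewrite S_INR.
    change (binomC (sg, v) (S n)) with (binomC (sg,v) n * ((sg,v) + RtoC (INR n)) / RtoC (INR n + 1))%C.
    assert (Hn : RtoC (INR n + 1) <> RtoC 0).
    { intros H. apply RtoC_inj in H. pose proof (pos_INR n). lra. }
    rewrite !RtoC_mult. rewrite !RtoC_plus in *.
    field. exact Hn.
Qed.

Lemma Cmod_polar r th : 0 <= r -> Cmod (r * cos th, r * sin th) = r.
Proof.
  intros Hr. unfold Cmod, fst, snd.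
  replace ((r * cos th) ^ 2 + (r * sin th) ^ 2) with (r ^ 2).
  - apply sqrt_pow2; auto.
  - pose proof (sin2_cos2 th). unfold Rsqr in H. nra.
Qed.

Lemma Cmod_E sg v u : Cmod (E sg v u) = exp (sg * ln (1 - u)).
Proof. unfold E. apply Cmod_polar. left; apply exp_pos. Qed.

Lemma E0 sg v : E sg v 0 = RtoC 1.
Proof.
  unfold E. replace (1 - 0) with 1 by ring. rewrite ln_1, !Rmult_0_r, exp_0, cos_0, sin_0.
  unfold RtoC. f_equal; ring.
Qed.

Lemma exp_le x y : x <= y -> exp x <= exp y.
Proof. intros [H|H]. left; apply exp_increasing; auto. subst; lra. Qed.

Lemma exp_bound k c q : 0 <= c <= q -> q < 1 ->
  exp (k * ln (1 - c)) <= exp (Rabs k * - ln (1 - q)).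
Proof.
  intros Hc Hq. apply exp_le.
  assert (H1 : ln (1 - q) <= ln (1 - c)) by (apply ln_le; lra).
  assert (H2 : ln (1 - c) <= 0) by (rewrite <- ln_1; apply ln_le; lra).
  apply Rle_trans with (Rabs k * Rabs (ln (1 - c))).
  - rewrite <- Rabs_mult. apply Rle_abs.
  - apply Rmult_le_compat_l. apply Rabs_pos. rewrite Rabs_left1 by lra. lra.
Qed.

Fixpoint beta (a : R) (k : nat) : R :=
  match k with O => 1 | S k => beta a k * (a + INR k) / (INR k + 1) end.

Lemma beta_nonneg a k : 0 <= a -> 0 <= beta a k.
Proof.
  intros Ha. induction k; simpl. lra.
  pose proof (pos_INR k). apply Rmult_le_pos. apply Rmult_le_pos; lra.
  left; apply Rinv_0_lt_compat; lra.
Qed.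

Lemma beta_pos a k : 0 < a -> 0 < beta a k.
Proof.
  intros Ha. induction k; simpl. lra.
  pose proof (pos_INR k). apply Rmult_lt_0_compat. apply Rmult_lt_0_compat; lra.
  apply Rinv_0_lt_compat; lra.
Qed.

Lemma beta_le_pow a k : 0 <= a -> beta a k <= (a + INR k) ^ k.
Proof.
  intros Ha. induction k; cbn [beta pow]. lra.
  pose proof (pos_INR k). rewrite S_INR.
  assert (0 <= beta a k) by (apply beta_nonneg; auto).
  assert ((a + INR k) ^ k <= (a + (INR k + 1)) ^ k) by (apply pow_incr; lra).
  assert ((a + INR k) / (INR k + 1) <= a + (INR k + 1)).
  { apply Rle_trans with (a + INR k). 2: lra.
    unfold Rdiv. rewrite <- (Rmult_1_r (a + INR k)) at 2. apply Rmult_le_compat_l. lra.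
    rewrite <- Rinv_1. apply Rinv_le_contravar; lra. }
  unfold Rdiv. rewrite Rmult_assoc. rewrite (Rmult_comm (a + (INR k + 1))).
  apply Rmult_le_compat; try lra.
  apply Rmult_le_pos; [lra| left; apply Rinv_0_lt_compat; lra].
Qed.

Lemma binom_bound s k : Cmod (binomC s k) <= beta (Cmod s) k.
Proof.
  induction k; simpl.
  - rewrite Cmod_1. lra.
  - pose proof (pos_INR k).
    assert (Hn : RtoC (INR k + 1) <> RtoC 0).
    { intros H'. apply RtoC_inj in H'. lra. }
    unfold Cdiv. rewrite !Cmod_mult, Cmod_inv by exact Hn. rewrite Cmod_R, Rabs_right by lra.
    unfold Rdiv. apply Rmult_le_compat_r. left; apply Rinv_0_lt_compat; lra.
    apply Rmult_le_compat; try apply Cmod_ge_0; auto.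
    eapply Rle_trans. apply Cmod_triangle. rewrite Cmod_R, Rabs_right. lra. lra.
Qed.

Lemma Cmod_minus_le x y : Cmod (x - y) <= Cmod x + Cmod y.
Proof. unfold Cminus. eapply Rle_trans. apply Cmod_triangle. rewrite Cmod_opp. lra. Qed.

Lemma Dj_bound sg v n0 j c : 0 <= c ->
  Cmod (Dj (sg,v) n0 j c) <= INR n0 * c ^ pred n0 * beta (Cmod (sg,v)) n0
     + INR (n0+j) * c ^ pred (n0+j) * beta (Cmod (sg,v)) (n0+j).
Proof.
  intros Hc. unfold Dj. eapply Rle_trans. apply Cmod_minus_le.
  rewrite !Cmod_mult, !Cmod_R. pose proof (pos_INR n0). pose proof (pos_INR (n0+j)).
  rewrite !Rabs_right by (apply Rle_ge, Rmult_le_pos; auto; apply pow_le; auto).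
  apply Rplus_le_compat; apply Rmult_le_compat_l; try apply binom_bound;
  apply Rmult_le_pos; auto; apply pow_le; auto.
Qed.

Lemma Tj0_pos s n0 j : (1 <= n0)%nat -> Tj s n0 j 0 = RtoC 0.
Proof.
  intros Hn. unfold Tj. induction j; cbn [csum]. reflexivity.
  rewrite IHj. rewrite pow_i by lia. rewrite Cmult_0_r. apply Cplus_0_l.
Qed.

Lemma Tj0_zero s j : Tj s 0 (S j) 0 = RtoC 1.
Proof.
  unfold Tj. induction j; cbn [csum].
  - rewrite Cplus_0_l. simpl. apply Cmult_1_l.
  - cbn [csum] in IHj. rewrite IHj. rewrite pow_i by lia. rewrite Cmult_0_r. apply Cplus_0_r.
Qed.

Lemma Tj0_bound s n0 j x : 0 <= x -> Cmod (Tj s n0 j 0) <= x ^ n0.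
Proof.
  intros Hx. destruct n0.
  - destruct j. unfold Tj; cbn [csum]. rewrite Cmod_0. simpl; lra.
    rewrite Tj0_zero, Cmod_1. simpl; lra.
  - rewrite Tj0_pos by lia. rewrite Cmod_0. apply pow_le; auto.
Qed.

Lemma re_conj_norm w : w <> RtoC 0 -> Re (Cconj w * RtoC (/ Cmod w) * w)%C = Cmod w.
Proof.
  intros Hw. assert (Hm : 0 < Cmod w) by (apply Cmod_gt_0; auto).
  pose proof (Cmod2_alt w) as H2.
  destruct w as [a b]. unfold Re, Im in H2. cbn [fst snd] in H2.
  unfold Cmult, Cconj, RtoC, Re, Im; cbn [fst snd].
  set (m := Cmod (a,b)) in *.
  replace ((a * / m - - b * 0) * a - (a * 0 + - b * / m) * b) with ((a^2 + b^2) / m) by (field; lra).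
  rewrite <- H2. field. lra.
Qed.

Lemma Cmod_al w : w <> RtoC 0 -> Cmod (Cconj w * RtoC (/ Cmod w))%C = 1.
Proof.
  intros Hw. assert (Hm : 0 < Cmod w) by (apply Cmod_gt_0; auto).
  rewrite Cmod_mult, Cmod_conj, Cmod_R, Rabs_right. field. lra.
  left; apply Rinv_0_lt_compat; auto.
Qed.

Lemma pow_pred_le c x n : 0 <= c <= x -> x <= 1 -> x * c ^ pred n <= x ^ n.
Proof.
  intros Hc Hx. apply Rle_trans with (x * x ^ pred n).
  apply Rmult_le_compat_l. lra. apply pow_incr. lra.
  destruct n; simpl. lra. lra.
Qed.

Lemma T_bound sg v n0 j q x : 0 < q < 1 -> 0 <= x <= q ->
  Cmod (Tj (sg,v) n0 j x) <= exp (Rabs sg * - ln (1-q)) *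
     (x ^ n0 + exp (Rabs (sg-1) * - ln (1-q)) *
       (INR n0 * beta (Cmod (sg,v)) n0 * x^n0
        + INR (n0+j) * beta (Cmod (sg,v)) (n0+j) * x^(n0+j))).
Proof.
  intros Hq Hx.
  set (a := Cmod (sg,v)).
  set (Lam := exp (Rabs (sg-1) * - ln (1-q))).
  set (RHS := x ^ n0 + Lam * (INR n0 * beta a n0 * x^n0 + INR (n0+j) * beta a (n0+j) * x^(n0+j))).
  assert (Ha : 0 <= a) by apply Cmod_ge_0.
  assert (HR : 0 <= RHS).
  { unfold RHS. pose proof (pos_INR n0). pose proof (pos_INR (n0+j)).
    pose proof (beta_nonneg a n0 Ha). pose proof (beta_nonneg a (n0+j) Ha).
    assert (0 <= x^n0) by (apply pow_le; lra). assert (0 <= x^(n0+j)) by (apply pow_le; lra).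
    assert (0 < Lam) by apply exp_pos.
    apply Rplus_le_le_0_compat; auto. apply Rmult_le_pos. lra.
    apply Rplus_le_le_0_compat; repeat apply Rmult_le_pos; auto. }
  set (h := fun u => (E sg v u * Tj (sg,v) n0 j u)%C).
  assert (Hh : Cmod (h x) <= RHS).
  { destruct (Ceq_dec (h x) (RtoC 0)) as [H0|H0].
    { rewrite H0, Cmod_0. auto. }
    set (al := (Cconj (h x) * RtoC (/ Cmod (h x)))%C).
    assert (Hal : Cmod al = 1) by (apply Cmod_al; auto).
    set (df := fun u => Re (al * E sg v u * RtoC (/(1-u)) * Dj (sg,v) n0 j u)%C).
    destruct (MVT_gen (fun u => Re (al * h u)%C) 0 x df) as [c [Hc Heq]].
    { intros u Hu. rewrite Rmin_left in Hu by lra. rewrite Rmax_right in Hu by lra.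
      apply deriv_T. lra. }
    { intros u Hu. rewrite Rmin_left in Hu by lra. rewrite Rmax_right in Hu by lra.
      apply continuity_pt_filterlim. apply (@ex_derive_continuous R_AbsRing R_NormedModule (fun u => Re (al * h u)%C) u).
      eexists. apply deriv_T. lra. }
    rewrite Rmin_left in Hc by lra. rewrite Rmax_right in Hc by lra.
    assert (Hfx : Re (al * h x)%C = Cmod (h x)).
    { unfold al. apply re_conj_norm; auto. }
    assert (Hf0 : Re (al * h 0)%C <= x ^ n0).
    { eapply Rle_trans. eapply Rle_trans. apply Rle_abs. apply re_le_Cmod.
      rewrite Cmod_mult, Hal, Rmult_1_l. unfold h. rewrite E0, Cmult_1_l.
      apply Tj0_bound. lra. }
    assert (Hdf : df c * x <= Lam * (INR n0 * beta a n0 * x^n0 + INR (n0+j) * beta a (n0+j) * x^(n0+j))).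
    { apply Rle_trans with (Rabs (df c) * x).
      { apply Rmult_le_compat_r. lra. apply Rle_abs. }
      apply Rle_trans with (Cmod (al * E sg v c * RtoC (/(1-c)) * Dj (sg,v) n0 j c)%C * x).
      { apply Rmult_le_compat_r. lra. apply re_le_Cmod. }
      rewrite !Cmod_mult, Hal, Rmult_1_l, Cmod_E, Cmod_R, Rabs_right.
      2: { left; apply Rinv_0_lt_compat; lra. }
      replace (exp (sg * ln (1 - c)) * / (1 - c)) with (exp ((sg - 1) * ln (1 - c))).
      2: { replace ((sg - 1) * ln (1 - c)) with (sg * ln (1 - c) + - ln (1 - c)) by ring.
           rewrite exp_plus, exp_Ropp, exp_ln by lra. reflexivity. }
      assert (HL : exp ((sg - 1) * ln (1 - c)) <= Lam) by (apply exp_bound; lra).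
      pose proof (Dj_bound sg v n0 j c ltac:(lra)) as HD. fold a in HD.
      rewrite Rmult_assoc. apply Rmult_le_compat. left; apply exp_pos.
      apply Rmult_le_pos. apply Cmod_ge_0. lra. auto.
      rewrite Rmult_comm. eapply Rle_trans. apply Rmult_le_compat_l. lra. exact HD.
      rewrite Rmult_plus_distr_l.
      pose proof (pos_INR n0). pose proof (pos_INR (n0+j)).
      pose proof (beta_nonneg a n0 Ha). pose proof (beta_nonneg a (n0+j) Ha).
      pose proof (pow_pred_le c x n0 ltac:(lra) ltac:(lra)).
      pose proof (pow_pred_le c x (n0+j) ltac:(lra) ltac:(lra)).
      apply Rplus_le_compat.
      - replace (x * (INR n0 * c ^ Init.Nat.pred n0 * beta a n0)) with
          ((INR n0 * beta a n0) * (x * c ^ Init.Nat.pred n0)) by ring.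
        apply Rmult_le_compat_l. apply Rmult_le_pos; auto. auto.
      - replace (x * (INR (n0+j) * c ^ Init.Nat.pred (n0+j) * beta a (n0+j))) with
          ((INR (n0+j) * beta a (n0+j)) * (x * c ^ Init.Nat.pred (n0+j))) by ring.
        apply Rmult_le_compat_l. apply Rmult_le_pos; auto. auto. }
    unfold RHS. rewrite <- Hfx. rewrite Rminus_0_r in Heq. lra. }
  unfold h in Hh. rewrite Cmod_mult, Cmod_E in Hh.
  assert (Hx1 : 0 < exp (sg * ln (1 - x))) by apply exp_pos.
  replace (Cmod (Tj (sg, v) n0 j x)) with (exp (- sg * ln (1 - x)) * (exp (sg * ln (1 - x)) * Cmod (Tj (sg, v) n0 j x))).
  2: { rewrite <- Rmult_assoc, <- exp_plus. replace (- sg * ln (1 - x) + sg * ln (1 - x)) with 0 by ring.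
       rewrite exp_0. ring. }
  apply Rmult_le_compat. left; apply exp_pos. apply Rmult_le_pos. lra. apply Cmod_ge_0.
  rewrite <- (Rabs_Ropp sg). apply exp_bound; lra.
  exact Hh.
Qed.

Fixpoint rsum (f : nat -> R) (n : nat) : R :=
  match n with O => 0 | S n => rsum f n + f n end.

Lemma csum_plus f g n : csum (fun i => f i + g i)%C n = (csum f n + csum g n)%C.
Proof. induction n; cbn [csum]. ring. rewrite IHn. ring. Qed.

Lemma csum_ext f g n : (forall i, f i = g i) -> csum f n = csum g n.
Proof. intros H; induction n; cbn [csum]; congruence. Qed.

Lemma csum_mult_l c f n : (c * csum f n)%C = csum (fun i => c * f i)%C n.
Proof. induction n; cbn [csum]. ring. rewrite <- IHn. ring. Qed.

Lemma csum_swap (F : nat -> nat -> C) j M :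
  csum (fun i => csum (fun m => F i m) M) j = csum (fun m => csum (fun i => F i m) j) M.
Proof.
  induction j; cbn [csum].
  - induction M; cbn [csum]. reflexivity. rewrite <- IHM. ring.
  - rewrite IHj. rewrite <- csum_plus. reflexivity.
Qed.

Lemma csum_split f n j : csum f (n + j) = (csum f n + csum (fun i => f (n + i)%nat) j)%C.
Proof. induction j; cbn [csum]. rewrite Nat.add_0_r. ring. rewrite Nat.add_succ_r. cbn [csum]. rewrite IHj. ring. Qed.

Lemma Cmod_csum f n : Cmod (csum f n) <= rsum (fun i => Cmod (f i)) n.
Proof.
  induction n; cbn [csum rsum]. rewrite Cmod_0; lra.
  eapply Rle_trans. apply Cmod_triangle. lra.
Qed.

Lemma rsum_le f g n : (forall i, (i < n)%nat -> f i <= g i) -> rsum f n <= rsum g n.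
Proof. induction n; intros H; cbn [rsum]. lra. apply Rplus_le_compat. apply IHn; intros; apply H; lia. apply H; lia. Qed.

Lemma rsum_plus f g n : rsum (fun i => f i + g i) n = rsum f n + rsum g n.
Proof. induction n; cbn [rsum]. ring. rewrite IHn. ring. Qed.

Lemma rsum_scal c f n : rsum (fun i => c * f i) n = c * rsum f n.
Proof. induction n; cbn [rsum]. ring. rewrite IHn. ring. Qed.

Lemma rsum_nonneg f n : (forall i, 0 <= f i) -> 0 <= rsum f n.
Proof. intros H; induction n; cbn [rsum]. lra. specialize (H n). lra. Qed.

Lemma rsum_geom th M : 0 <= th < 1 -> rsum (fun m => th ^ S m) M <= th / (1 - th).
Proof.
  intros Ht. assert (E : rsum (fun m => th ^ S m) M = th * (1 - th ^ M) / (1 - th)).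
  { induction M; cbn [rsum]. simpl. field. lra. rewrite IHM. simpl. field. lra. }
  rewrite E. unfold Rdiv. apply Rmult_le_compat_r. left; apply Rinv_0_lt_compat; lra.
  assert (0 <= th ^ M) by (apply pow_le; lra). nra.
Qed.

Lemma geom_id (y : C) M : y <> RtoC 1 ->
  (y / (1 - y))%C = (csum (fun m => y ^ S m) M + y ^ M * (y / (1 - y)))%C.
Proof.
  intros Hy. assert (H1 : (1 - y)%C <> RtoC 0).
  { intros H. apply Hy. apply Ceq_minus in H. symmetry. exact H. }
  induction M; cbn [csum].
  - simpl. ring.
  - rewrite IHM at 1. simpl. field. exact H1.
Qed.

Lemma qpow_ext q w1 w2 : Re w1 = Re w2 -> Im w1 = Im w2 -> qpow q w1 = qpow q w2.
Proof. intros H1 H2. unfold qpow. rewrite H1, H2. reflexivity. Qed.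

Lemma Cmod_qpow q w : Cmod (qpow q w) = Rpower q (Re w).
Proof. unfold qpow. apply Cmod_polar. unfold Rpower. left; apply exp_pos. Qed.

Lemma qpow_shift q sg v k : 0 < q ->
  qpow q ((sg,v) - 1 + RtoC (INR k))%C = (qpow q ((sg,v) - 1)%C * RtoC (q^k))%C.
Proof.
  intros Hq. unfold qpow.
  replace (Re ((sg, v) - 1 + RtoC (INR k))%C) with (Re ((sg, v) - 1)%C + INR k) by (simpl; ring).
  replace (Im ((sg, v) - 1 + RtoC (INR k))%C) with (Im ((sg, v) - 1)%C) by (simpl; ring).
  rewrite Rpower_plus, Rpower_pow by auto.
  unfold Cmult, RtoC; cbn [fst snd]. f_equal; ring.
Qed.

Lemma qpow_Z q sg v k :
  qpow q (RtoC (IZR (Z.of_nat k - 1)) + (sg,v))%C = qpow q ((sg,v) - 1 + RtoC (INR k))%C.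
Proof.
  apply qpow_ext; simpl.
  - rewrite minus_IZR, <- INR_IZR_INZ. ring.
  - ring.
Qed.

Lemma mid_identity (s z : C) (q : R) (n0 j M : nat) (y : nat -> C) :
  (forall k, y k = (z * RtoC (q^k))%C) ->
  (forall i, y (n0 + i)%nat <> RtoC 1) ->
  csum (fun i => binomC s (n0+i) * (y (n0+i)%nat / (1 - y (n0+i)%nat)))%C j =
  (csum (fun m => z ^ S m * Tj s n0 j (q ^ S m))%C M
   + csum (fun i => binomC s (n0+i) * (y (n0+i)%nat) ^ M * (y (n0+i)%nat / (1 - y (n0+i)%nat)))%C j)%C.
Proof.
  intros Hyd Hy.
  rewrite (csum_ext _ (fun i => binomC s (n0+i) * csum (fun m => y (n0+i)%nat ^ S m) M
         + binomC s (n0+i) * y (n0+i)%nat ^ M * (y (n0+i)%nat / (1 - y (n0+i)%nat)))%C).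
  2: { intros i. rewrite (geom_id _ M (Hy i)) at 1. ring. }
  rewrite csum_plus. f_equal.
  rewrite (csum_ext _ (fun i => csum (fun m => binomC s (n0+i) * y (n0+i)%nat ^ S m) M)%C).
  2: { intros i. apply csum_mult_l. }
  rewrite csum_swap. apply csum_ext. intros m.
  unfold Tj. rewrite csum_mult_l. apply csum_ext. intros i.
  rewrite Hyd, Cpow_mult_l, <- !RtoC_pow, <- !pow_mult, Nat.mul_comm. ring.
Qed.

Lemma lim_helper X Y W th : 0 <= th < 1 -> (forall M, X <= Y + th ^ M * W) -> X <= Y.
Proof.
  intros Ht H.
  assert (L : is_lim_seq (fun M => Y + th ^ M * W) (Y + 0 * W)).
  { apply is_lim_seq_plus'. apply is_lim_seq_const. apply is_lim_seq_mult'.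
    apply is_lim_seq_geom. rewrite Rabs_right; lra. apply is_lim_seq_const. }
  pose proof (is_lim_seq_le (fun _ => X) _ X _ H (is_lim_seq_const X) L) as HL.
  simpl in HL. lra.
Qed.

Lemma Cmod_1_minus y : 1 - Cmod y <= Cmod (1 - y)%C.
Proof.
  pose proof (Cmod_triangle (1 - y)%C y). replace (1 - y + y)%C with (RtoC 1) in H by ring.
  rewrite Cmod_1 in H. lra.
Qed.

Lemma pow_le_one x n : 0 <= x <= 1 -> x ^ n <= 1.
Proof. intros H; induction n; simpl. lra. nra. Qed.

Lemma mid_bound q sg v n0 j :
  0 < q < 1 ->
  let z := qpow q ((sg,v) - 1)%C in
  let rho := Rpower q (sg - 1) in
  let th := rho * q ^ n0 in
  th < 1 ->
  let a := Cmod (sg,v) in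
  let Lam := exp (Rabs (sg-1) * - ln (1-q)) in
  let Lam' := exp (Rabs sg * - ln (1-q)) in
  let y := fun k => (z * RtoC (q^k))%C in
  Cmod (csum (fun i => binomC (sg,v) (n0+i) * (y (n0+i)%nat / (1 - y (n0+i)%nat)))%C j)
   <= (Lam' * (1 + Lam * INR n0 * beta a n0) + Lam' * Lam * INR (n0+j) * beta a (n0+j) * q ^ j)
      * (th / (1 - th)).
Proof.
  intros Hq z rho th Hth a Lam Lam' y.
  assert (Hrho : 0 < rho) by (unfold rho, Rpower; apply exp_pos).
  assert (Hz : Cmod z = rho).
  { unfold z. rewrite Cmod_qpow. unfold rho. f_equal. }
  assert (Hqn : forall n, 0 < q ^ n) by (intros; apply pow_lt; lra).
  assert (Hth0 : 0 < th) by (unfold th; apply Rmult_lt_0_compat; auto).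
  assert (Hyk : forall i, Cmod (y (n0+i)%nat) <= th).
  { intros i. unfold y. rewrite Cmod_mult, Hz, Cmod_R, Rabs_right by (apply Rle_ge, pow_le; lra).
    unfold th. apply Rmult_le_compat_l. lra. rewrite pow_add.
    rewrite <- (Rmult_1_r (q ^ n0)) at 2. apply Rmult_le_compat_l. left; auto.
    apply pow_le_one; lra. }
  assert (Hy1 : forall i, y (n0+i)%nat <> RtoC 1).
  { intros i H. pose proof (Hyk i). rewrite H, Cmod_1 in H0. lra. }
  set (A := Lam' * (1 + Lam * INR n0 * beta a n0)).
  set (Bj := Lam' * Lam * INR (n0+j) * beta a (n0+j)).
  assert (Ha : 0 <= a) by apply Cmod_ge_0.
  assert (HA : 0 <= A).
  { unfold A, Lam, Lam'. pose proof (exp_pos (Rabs sg * - ln (1 - q))). pose proof (exp_pos (Rabs (sg-1) * - ln (1 - q))).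
    pose proof (pos_INR n0). pose proof (beta_nonneg a n0 Ha).
    apply Rmult_le_pos. lra. assert (0 <= (exp (Rabs (sg - 1) * - ln (1 - q)) * INR n0 * beta a n0)) by (repeat apply Rmult_le_pos; lra). lra. }
  assert (HB : 0 <= Bj).
  { unfold Bj, Lam, Lam'. pose proof (exp_pos (Rabs sg * - ln (1 - q))). pose proof (exp_pos (Rabs (sg-1) * - ln (1 - q))).
    pose proof (pos_INR (n0+j)). pose proof (beta_nonneg a (n0+j) Ha).
    repeat apply Rmult_le_pos; lra. }
  set (W := rsum (fun i => beta a (n0+i) * Cmod (y (n0+i)%nat / (1 - y (n0+i)%nat))%C) j).
  apply (lim_helper _ _ W th). lra.
  intros M. rewrite (mid_identity (sg,v) z q n0 j M y (fun k => eq_refl) Hy1).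
  eapply Rle_trans. apply Cmod_triangle. apply Rplus_le_compat.
  - eapply Rle_trans. apply Cmod_csum.
    eapply Rle_trans. apply rsum_le with (g := fun m => A * th ^ S m + Bj * (th * q ^ j) ^ S m).
    { intros m _. rewrite Cmod_mult, Cmod_pow, Hz.
      assert (HX : 0 <= q ^ S m <= q).
      { split. left; auto. rewrite <- tech_pow_Rmult. apply Rle_trans with (q * 1). apply Rmult_le_compat_l. lra. apply pow_le_one; lra. lra. }
      pose proof (T_bound sg v n0 j q (q ^ S m) Hq HX) as HT. fold a Lam Lam' in HT.
      eapply Rle_trans. apply Rmult_le_compat_l. apply pow_le; lra. exact HT.
      assert (E1 : rho ^ S m * (q ^ S m) ^ n0 = th ^ S m).
      { unfold th. rewrite Rpow_mult_distr, <- !pow_mult, Nat.mul_comm. reflexivity. }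
      assert (E2 : rho ^ S m * (q ^ S m) ^ (n0 + j) = (th * q ^ j) ^ S m).
      { unfold th. rewrite Rmult_assoc, <- pow_add, Rpow_mult_distr, <- !pow_mult, Nat.mul_comm. reflexivity. }
      unfold A, Bj. rewrite <- E1, <- E2. right. ring. }
    rewrite rsum_plus, !rsum_scal.
    pose proof (rsum_geom th M ltac:(lra)).
    assert (Hqj : 0 < q ^ j <= 1) by (split; auto; apply pow_le_one; lra).
    pose proof (rsum_geom (th * q ^ j) M ltac:(nra)).
    assert (th * q ^ j / (1 - th * q ^ j) <= q ^ j * (th / (1 - th))).
    { unfold Rdiv. rewrite <- Rmult_assoc, (Rmult_comm (q ^ j)).
      apply Rmult_le_compat_l. nra. apply Rinv_le_contravar; nra. }
    assert (A * rsum (fun m => th ^ S m) M <= A * (th / (1 - th))) by (apply Rmult_le_compat_l; auto).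
    assert (Bj * rsum (fun m => (th * q ^ j) ^ S m) M <= Bj * (q ^ j * (th / (1 - th)))) by (apply Rmult_le_compat_l; lra).
    nra.
  - eapply Rle_trans. apply Cmod_csum. unfold W. rewrite <- rsum_scal.
    apply rsum_le. intros i _. rewrite !Cmod_mult, Cmod_pow.
    pose proof (binom_bound (sg,v) (n0+i)). fold a in H.
    assert (0 <= Cmod (y (n0 + i)%nat) ^ M <= th ^ M) by (split; [apply pow_le, Cmod_ge_0 | apply pow_incr; split; [apply Cmod_ge_0 | auto]]).
    pose proof (Cmod_ge_0 (y (n0 + i)%nat / (1 - y (n0 + i)%nat))%C).
    pose proof (Cmod_ge_0 (binomC (sg, v) (n0 + i))).
    replace (th ^ M * (beta a (n0 + i) * Cmod (y (n0 + i)%nat / (1 - y (n0 + i)%nat))%C))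
      with (beta a (n0 + i) * th ^ M * Cmod (y (n0 + i)%nat / (1 - y (n0 + i)%nat))%C) by ring.
    apply Rmult_le_compat_r; auto. apply Rmult_le_compat; lra.
Qed.

Definition cseq (a q : R) (N : nat) : R := (a + INR N) * beta a N * q ^ N.

Lemma cseq_pos a q N : 0 < a -> 0 < q -> 0 < cseq a q N.
Proof.
  intros Ha Hq. unfold cseq. pose proof (pos_INR N). pose proof (beta_pos a N Ha).
  pose proof (pow_lt q N Hq). repeat apply Rmult_lt_0_compat; lra.
Qed.

Lemma inv_n_lim : is_lim_seq (fun n => / (INR n + 1)) 0.
Proof.
  assert (H : is_lim_seq (fun n => INR (S n)) p_infty).
  { apply (is_lim_seq_incr_1 INR p_infty). apply is_lim_seq_INR. }
  apply is_lim_seq_inv in H. 2: discriminate.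
  eapply is_lim_seq_ext. 2: exact H. intros n. cbv beta. rewrite (S_INR n). reflexivity.
Qed.

Lemma cseq_series a q : 0 < a -> 0 < q < 1 -> ex_series (cseq a q).
Proof.
  intros Ha Hq.
  assert (H : ex_series (fun n => Rabs (cseq a q n))).
  { apply ex_series_DAlembert with q. lra.
    intros n. pose proof (cseq_pos a q n Ha ltac:(lra)). lra.
    eapply is_lim_seq_ext with (u := fun n => q + a * q * / (INR n + 1)).
    { intros n. unfold cseq. cbn [beta]. rewrite S_INR. pose proof (pos_INR n).
      pose proof (beta_pos a n Ha). pose proof (pow_lt q n ltac:(lra)).
      rewrite Rabs_right. simpl. field. repeat split; intro; lra.
      apply Rle_ge, Rlt_le. unfold Rdiv.
      repeat (apply Rmult_lt_0_compat || apply Rinv_0_lt_compat); try lra; try (apply pow_lt; lra). }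
    assert (L : is_lim_seq (fun n => q + a*q*/(INR n+1)) (q + a*q*0)).
    { apply is_lim_seq_plus'. apply is_lim_seq_const. apply is_lim_seq_mult'.
      apply is_lim_seq_const. apply inv_n_lim. }
    rewrite Rmult_0_r, Rplus_0_r in L. exact L. }
  eapply ex_series_ext. 2: exact H. intros n. apply Rabs_right. left; apply cseq_pos; lra.
Qed.

Lemma cseq_lim a q : 0 < a -> 0 < q < 1 -> is_lim_seq (cseq a q) 0.
Proof. intros. apply ex_series_lim_0. apply cseq_series; auto. Qed.

Lemma sum_n_csum (f : nat -> C) N :
  sum_n (fun k => Re (f k)) N = Re (csum f (S N)) /\ sum_n (fun k => Im (f k)) N = Im (csum f (S N)).
Proof.
  induction N.
  - rewrite !sum_O. cbn [csum]. rewrite re_plus, im_plus. change (Re (RtoC 0)) with 0. change (Im (RtoC 0)) with 0. split; ring_simplify; reflexivity.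
  - rewrite !sum_Sn. destruct IHN as [H1 H2]. rewrite H1, H2. change (csum f (S (S N))) with (csum f (S N) + f (S N))%C.
    rewrite re_plus, im_plus. split; reflexivity.
Qed.

Lemma Cmod_le_abs x y : Cmod (x, y) <= Rabs x + Rabs y.
Proof.
  replace (x,y) with (RtoC x + (0,y))%C by (unfold RtoC, Cplus; simpl; f_equal; ring).
  eapply Rle_trans. apply Cmod_triangle. rewrite Cmod_R.
  assert (Cmod (0, y) = Rabs y).
  { unfold Cmod, fst, snd. replace (0 ^ 2 + y ^ 2) with (y²) by (unfold Rsqr; ring). apply sqrt_Rsqr_abs. }
  lra.
Qed.

Lemma Rpower_lt_1 q w : 0 < q < 1 -> 0 < w -> Rpower q w < 1.
Proof.
  intros Hq Hw. unfold Rpower. rewrite <- exp_0. apply exp_increasing.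
  assert (ln q < 0) by (rewrite <- ln_1; apply ln_increasing; lra). nra.
Qed.

Lemma rsum_const c n : rsum (fun _ => c) n = INR n * c.
Proof. induction n; cbn [rsum]. simpl; ring. rewrite IHn, S_INR. ring. Qed.

Lemma lim_abs_diff u (l : R) : is_lim_seq u l -> is_lim_seq (fun j => Rabs (l - u j)) 0.
Proof.
  intros H. assert (H2 := is_lim_seq_abs _ _ (is_lim_seq_minus' _ _ _ _ (is_lim_seq_const l) H)).
  replace (Rbar_abs (l - l)) with (Finite 0) in H2. exact H2.
  simpl. f_equal. rewrite Rminus_diag, Rabs_R0. reflexivity.
Qed.

Lemma im_le_Cmod c : Rabs (Im c) <= Cmod c.
Proof. eapply Rle_trans. 2: apply Rmax_Cmod. apply Rmax_r. Qed.

Lemma core q sg v n0 eps delta : 0 < q < 1 -> 1 <= Rabs v -> 0 < eps < delta -> 0 < sg - 1 + INR n0 ->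
 (forall r : Z, (-1 <= r)%Z -> delta <= Cmod (1 - qpow q (RtoC (IZR r) + (sg, v)))%C) ->
 Cmod (CSeries (fun k => binomC (sg,v) k * qpow q ((sg,v) - 1 + RtoC (INR k))
                     / (1 - qpow q ((sg,v) - 1 + RtoC (INR k))))%C)
  <= INR n0 * ((Cmod (sg,v) + INR n0)^n0 * Rpower q (sg-1) / eps)
     + exp (Rabs sg * - ln (1-q)) * (1 + exp (Rabs (sg-1) * - ln (1-q)) * INR n0 * (Cmod (sg,v) + INR n0)^n0)
       * (Rpower q (sg-1+INR n0) / (1 - Rpower q (sg-1+INR n0))).
Proof.
  intros Hq Hv Heps Hn0 Hyp.
  set (z := qpow q ((sg,v) - 1)%C).
  set (rho := Rpower q (sg - 1)).
  set (th := rho * q ^ n0).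
  assert (Hth_eq : Rpower q (sg - 1 + INR n0) = th).
  { unfold th, rho. rewrite Rpower_plus, Rpower_pow by lra. reflexivity. }
  rewrite Hth_eq.
  assert (Hth : th < 1) by (rewrite <- Hth_eq; apply Rpower_lt_1; lra).
  set (a := Cmod (sg,v)).
  assert (Ha1 : 1 <= a).
  { unfold a. eapply Rle_trans. 2: apply Rmax_Cmod. simpl. eapply Rle_trans. exact Hv. apply Rmax_r. }
  set (Lam := exp (Rabs (sg-1) * - ln (1-q))).
  set (Lam' := exp (Rabs sg * - ln (1-q))).
  set (y := fun k => (z * RtoC (q^k))%C).
  set (T := fun k => (binomC (sg,v) k * (y k / (1 - y k)))%C).
  assert (HT : forall k, (binomC (sg,v) k * qpow q ((sg,v) - 1 + RtoC (INR k)) / (1 - qpow q ((sg,v) - 1 + RtoC (INR k))))%C = T k).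
  { intros k. unfold T, y, z. rewrite qpow_shift by lra. unfold Cdiv. ring. }
  unfold CSeries.
  rewrite (Series_ext _ (fun k => Re (T k))) by (intros; rewrite HT; reflexivity).
  rewrite (Series_ext (fun k => Im _) (fun k => Im (T k))) by (intros; rewrite HT; reflexivity).
  assert (Hrho : 0 < rho) by (unfold rho, Rpower; apply exp_pos).
  assert (Hz : Cmod z = rho) by (unfold z; rewrite Cmod_qpow; unfold rho; f_equal).
  assert (Hqn : forall n, 0 < q ^ n) by (intros; apply pow_lt; lra).
  assert (Hth0 : 0 < th) by (unfold th; apply Rmult_lt_0_compat; auto).
  assert (Hyk : forall k, Cmod (y k) = rho * q ^ k).
  { intros k. unfold y. rewrite Cmod_mult, Hz, Cmod_R, Rabs_right by (apply Rle_ge, pow_le; lra). reflexivity. }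
  assert (Htail : forall k, (n0 <= k)%nat -> Cmod (T k) <= cseq a q k * (rho / (1 - th))).
  { intros k Hk. unfold T.
    assert (Hyth : rho * q ^ k <= th).
    { unfold th. apply Rmult_le_compat_l. lra. replace k with (n0 + (k - n0))%nat by lia.
      rewrite pow_add. rewrite <- (Rmult_1_r (q ^ n0)) at 2. apply Rmult_le_compat_l. left; auto.
      apply pow_le_one; lra. }
    assert (H1y : 1 - th <= Cmod (1 - y k)%C).
    { pose proof (Cmod_1_minus (y k)). rewrite Hyk in H. lra. }
    assert (Hne : (1 - y k)%C <> RtoC 0).
    { intros H. rewrite H, Cmod_0 in H1y. lra. }
    unfold Cdiv. rewrite !Cmod_mult, Cmod_inv by auto. rewrite Hyk.
    pose proof (binom_bound (sg,v) k). fold a in H.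
    pose proof (beta_nonneg a k ltac:(lra)). pose proof (pos_INR k).
    unfold cseq.
    apply Rle_trans with (beta a k * (rho * q ^ k * / (1 - th))).
    { apply Rmult_le_compat; try apply Cmod_ge_0; auto.
      apply Rmult_le_pos. pose proof (Hqn k); nra. left; apply Rinv_0_lt_compat.
      pose proof (Cmod_1_minus (y k)); lra.
      apply Rmult_le_compat_l. pose proof (Hqn k); nra.
      apply Rinv_le_contravar; lra. }
    unfold Rdiv. pose proof (Hqn k).
    assert (0 < / (1 - th)) by (apply Rinv_0_lt_compat; lra).
    replace ((a + INR k) * beta a k * q ^ k * (rho * / (1 - th))) with
      ((a + INR k) * (beta a k * (rho * q ^ k * / (1 - th)))) by ring.
    rewrite <- (Rmult_1_l (beta a k * (rho * q ^ k * / (1 - th)))) at 1.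
    apply Rmult_le_compat_r. repeat apply Rmult_le_pos; lra. lra. }
  assert (Hcs : ex_series (fun k => cseq a q (n0 + k)%nat * (rho / (1 - th)))).
  { apply ex_series_scal_r. apply (ex_series_incr_n (cseq a q) n0). apply cseq_series; lra. }
  assert (HexR : ex_series (fun k => Re (T k))).
  { apply (ex_series_incr_n _ n0). eapply (@ex_series_le R_AbsRing R_CompleteNormedModule). 2: exact Hcs.
    intros k. change (norm (Re (T (n0+k)%nat))) with (Rabs (Re (T (n0+k)%nat))).
    eapply Rle_trans. apply re_le_Cmod. apply Htail. lia. }
  assert (HexI : ex_series (fun k => Im (T k))).
  { apply (ex_series_incr_n _ n0). eapply (@ex_series_le R_AbsRing R_CompleteNormedModule). 2: exact Hcs.
    intros k. change (norm (Im (T (n0+k)%nat))) with (Rabs (Im (T (n0+k)%nat))).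
    eapply Rle_trans. apply im_le_Cmod. apply Htail. lia. }
  set (H0 := INR n0 * ((a + INR n0)^n0 * rho / eps)).
  assert (Hhead : Cmod (csum T n0) <= H0).
  { eapply Rle_trans. apply Cmod_csum. unfold H0. rewrite <- rsum_const.
    apply rsum_le. intros k Hk. unfold T.
    assert (Hyp' := Hyp (Z.of_nat k - 1)%Z ltac:(lia)).
    rewrite qpow_Z, qpow_shift in Hyp' by lra. fold z y in Hyp'.
    change (z * RtoC (q ^ k))%C with (y k) in Hyp'.
    assert (Hne : (1 - y k)%C <> RtoC 0).
    { intros H. rewrite H, Cmod_0 in Hyp'. lra. }
    unfold Cdiv. rewrite !Cmod_mult, Cmod_inv by auto. rewrite Hyk.
    pose proof (binom_bound (sg,v) k). fold a in H.
    pose proof (beta_nonneg a k ltac:(lra)). pose proof (pos_INR k). pose proof (pos_INR n0).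
    assert (Hb : beta a k <= (a + INR n0) ^ n0).
    { eapply Rle_trans. apply beta_le_pow. lra.
      apply Rle_trans with ((a + INR n0) ^ k). apply pow_incr. split. lra.
      apply Rplus_le_compat_l. apply le_INR. lia.
      apply Rle_pow. lra. lia. }
    assert (Hq1 : q ^ k <= 1) by (apply pow_le_one; lra).
    assert (Hqk := Hqn k).
    assert (Hi : / Cmod (1 - y k)%C <= / eps) by (apply Rinv_le_contravar; lra).
    assert (0 < / Cmod (1 - y k)%C) by (apply Rinv_0_lt_compat; lra).
    unfold Rdiv.
    apply Rle_trans with ((a + INR n0) ^ n0 * (rho * / eps)).
    2: right; ring.
    apply Rmult_le_compat. apply Cmod_ge_0. apply Rmult_le_pos. nra. lra. lra.
    apply Rmult_le_compat. nra. lra. nra. lra. }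
  set (A := Lam' * (1 + Lam * INR n0 * beta a n0)).
  set (Bj := fun j => Lam' * Lam * INR (n0+j) * beta a (n0+j)).
  assert (Hmid : forall j, Cmod (csum (fun i => T (n0+i)%nat) j) <= (A + Bj j * q ^ j) * (th / (1 - th))).
  { intros j. exact (mid_bound q sg v n0 j Hq Hth). }
  set (LR := Series (fun k => Re (T k))).
  set (LI := Series (fun k => Im (T k))).
  assert (HLR : is_lim_seq (fun j => Re (csum T (n0 + S j))) LR).
  { pose proof (Series_correct _ HexR) as H0'. fold LR in H0'.
    assert (H : is_lim_seq (sum_n (fun k => Re (T k))) LR) by exact H0'.
    apply (is_lim_seq_incr_n _ n0) in H. eapply is_lim_seq_ext. 2: exact H.
    intros j. cbv beta. rewrite (proj1 (sum_n_csum T (j + n0))). f_equal. f_equal. lia. }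
  assert (HLI : is_lim_seq (fun j => Im (csum T (n0 + S j))) LI).
  { pose proof (Series_correct _ HexI) as H0'. fold LI in H0'.
    assert (H : is_lim_seq (sum_n (fun k => Im (T k))) LI) by exact H0'.
    apply (is_lim_seq_incr_n _ n0) in H. eapply is_lim_seq_ext. 2: exact H.
    intros j. cbv beta. rewrite (proj2 (sum_n_csum T (j + n0))). f_equal. f_equal. lia. }
  set (Ej := fun j => Bj (S j) * q ^ S j * (th / (1 - th))).
  assert (HE : is_lim_seq Ej 0).
  { set (K := Lam' * Lam * (th / (1 - th)) * / q ^ n0).
    apply is_lim_seq_le_le with (u := fun _ => 0) (w := fun j => K * cseq a q (j + S n0)).
    - intros j. unfold Ej, Bj, K, cseq.
      pose proof (exp_pos (Rabs (sg - 1) * - ln (1 - q))). pose proof (exp_pos (Rabs sg * - ln (1 - q))).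
      fold Lam Lam' in H, H1.
      pose proof (pos_INR (n0 + S j)). pose proof (beta_nonneg a (n0 + S j) ltac:(lra)).
      assert (0 < th / (1 - th)) by (apply Rdiv_lt_0_compat; lra).
      pose proof (Hqn (S j)). pose proof (Hqn n0).
      replace (j + S n0)%nat with (n0 + S j)%nat by lia.
      split. apply Rmult_le_pos; [repeat apply Rmult_le_pos; try lra; apply pow_le; lra | lra].
      rewrite pow_add.
      replace (Lam' * Lam * (th / (1 - th)) * / q ^ n0 * ((a + INR (n0 + S j)) * beta a (n0 + S j) * (q ^ n0 * q ^ S j)))
        with ((Lam' * Lam * (th / (1 - th))) * ((a + INR (n0 + S j)) * beta a (n0 + S j) * q ^ S j)) by (field; lra).
      replace (Lam' * Lam * INR (n0 + S j) * beta a (n0 + S j) * q ^ S j * (th / (1 - th)))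
        with ((Lam' * Lam * (th / (1 - th))) * (INR (n0 + S j) * beta a (n0 + S j) * q ^ S j)) by ring.
      apply Rmult_le_compat_l. apply Rmult_le_pos; [apply Rmult_le_pos|]; lra.
      apply Rmult_le_compat_r. lra. apply Rmult_le_compat_r. lra. lra.
    - apply is_lim_seq_const.
    - replace (Finite 0) with (Rbar_mult K 0) by (simpl; f_equal; ring).
      apply is_lim_seq_scal_l. apply (proj1 (is_lim_seq_incr_n (cseq a q) (S n0) 0)). apply cseq_lim; lra. }
  assert (Hfin : Cmod (LR, LI) <= H0 + A * (th / (1 - th))).
  { set (Bnd := H0 + A * (th / (1 - th))).
    assert (L : is_lim_seq (fun j => Bnd + Ej j + Rabs (LR - Re (csum T (n0 + S j))) + Rabs (LI - Im (csum T (n0 + S j))))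
                  (Bnd + 0 + 0 + 0)).
    { apply is_lim_seq_plus'. apply is_lim_seq_plus'. apply is_lim_seq_plus'.
      apply is_lim_seq_const. exact HE. apply lim_abs_diff; auto. apply lim_abs_diff; auto. }
    assert (Hpt : forall j, Cmod (LR, LI) <= Bnd + Ej j + Rabs (LR - Re (csum T (n0 + S j))) + Rabs (LI - Im (csum T (n0 + S j)))).
    { intros j. set (c := csum T (n0 + S j)).
      assert (Hc : Cmod c <= Bnd + Ej j).
      { unfold c. rewrite csum_split. eapply Rle_trans. apply Cmod_triangle.
        pose proof (Hmid (S j)). unfold Bnd, Ej. nra. }
      replace (LR, LI) with (c + ((LR - Re c)%R, (LI - Im c)%R))%C.
      2: { destruct c as [c1 c2]. unfold Cplus; simpl. f_equal; ring. }
      eapply Rle_trans. apply Cmod_triangle.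
      pose proof (Cmod_le_abs (LR - Re c) (LI - Im c)). lra. }
    pose proof (is_lim_seq_le (fun _ => Cmod (LR, LI)) _ _ _ Hpt (is_lim_seq_const _) L) as HL.
    simpl in HL. lra. }
  eapply Rle_trans. exact Hfin.
  apply Rplus_le_compat_l. apply Rmult_le_compat_r.
  { left; apply Rdiv_lt_0_compat; lra. }
  unfold A. apply Rmult_le_compat_l. left; apply exp_pos.
  apply Rplus_le_compat_l. apply Rmult_le_compat_l.
  { pose proof (exp_pos (Rabs (sg - 1) * - ln (1 - q))). pose proof (pos_INR n0). fold Lam in H. nra. }
  apply beta_le_pow. lra.
Qed.

Definition thK q sg n0 := Rpower q (sg - 1 + INR n0).
Definition K1 q sg n0 eps :=
  INR n0 * Rpower q (sg - 1) / eps
  + exp (Rabs sg * - ln (1-q)) * exp (Rabs (sg-1) * - ln (1-q)) * INR n0 * (thK q sg n0 / (1 - thK q sg n0)).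
Definition K2 q sg n0 := exp (Rabs sg * - ln (1-q)) * (thK q sg n0 / (1 - thK q sg n0)).

Lemma K_nonneg q sg n0 eps : 0 < q < 1 -> 0 < eps -> 0 < sg - 1 + INR n0 ->
  0 <= K1 q sg n0 eps /\ 0 <= K2 q sg n0.
Proof.
  intros Hq He Hn.
  assert (Ht : 0 < thK q sg n0 < 1).
  { split. unfold thK, Rpower; apply exp_pos. apply Rpower_lt_1; lra. }
  assert (0 < thK q sg n0 / (1 - thK q sg n0)) by (apply Rdiv_lt_0_compat; lra).
  pose proof (exp_pos (Rabs sg * - ln (1-q))). pose proof (exp_pos (Rabs (sg-1) * - ln (1-q))).
  pose proof (pos_INR n0). assert (0 < Rpower q (sg - 1)) by (unfold Rpower; apply exp_pos).
  unfold K1, K2. split.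
  - apply Rplus_le_le_0_compat.
    + assert (0 < / eps) by (apply Rinv_0_lt_compat; lra).
      unfold Rdiv. apply Rmult_le_pos. apply Rmult_le_pos; lra. lra.
    + apply Rmult_le_pos. apply Rmult_le_pos. apply Rmult_le_pos; lra. lra. lra.
  - nra.
Qed.

Lemma core2 q sg v n0 eps delta : 0 < q < 1 -> 1 <= Rabs v -> 0 < eps < delta -> 0 < sg - 1 + INR n0 ->
 (forall r : Z, (-1 <= r)%Z -> delta <= Cmod (1 - qpow q (RtoC (IZR r) + (sg, v)))%C) ->
 Cmod (zeta_q q (sg, v)) <=
   Rpower (1-q) sg * (K1 q sg n0 eps * (Rabs sg + INR n0 + Rabs v) ^ n0 + K2 q sg n0).
Proof.
  intros Hq Hv He Hn Hyp.
  unfold zeta_q, zeta_q2. rewrite Cmod_mult, Cmod_qpow.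
  change (Re (sg, v)) with sg.
  apply Rmult_le_compat_l. unfold Rpower; left; apply exp_pos.
  eapply Rle_trans. apply (core q sg v n0 eps delta Hq Hv He Hn Hyp).
  destruct (K_nonneg q sg n0 eps Hq ltac:(lra) Hn) as [HK1 HK2].
  assert (Ha : Cmod (sg, v) + INR n0 <= Rabs sg + INR n0 + Rabs v).
  { pose proof (Cmod_le_abs sg v). lra. }
  assert (Hp : (Cmod (sg, v) + INR n0) ^ n0 <= (Rabs sg + INR n0 + Rabs v) ^ n0).
  { apply pow_incr. split. pose proof (Cmod_ge_0 (sg,v)). pose proof (pos_INR n0). lra. auto. }
  apply Rle_trans with (K1 q sg n0 eps * (Cmod (sg, v) + INR n0) ^ n0 + K2 q sg n0).
  - right. unfold K1, K2, thK. field.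
    pose proof (Rpower_lt_1 q (sg - 1 + INR n0) Hq Hn). split; intro; lra.
  - apply Rplus_le_compat_r. apply Rmult_le_compat_l; auto.
Qed.

Lemma pow_exp_bound w n : 0 <= w -> w ^ n <= exp (INR n * w).
Proof.
  intros Hw. induction n.
  - simpl. rewrite Rmult_0_l, exp_0. lra.
  - rewrite S_INR. replace ((INR n + 1) * w) with (w + INR n * w) by ring.
    rewrite exp_plus. simpl. apply Rmult_le_compat; auto. apply pow_le; auto.
    pose proof (exp_ineq1_le w). lra.
Qed.

Lemma poly_exp c Y n : 0 < c -> 0 <= Y -> Y ^ n <= ((INR n + 1) / c) ^ n * exp (c * Y).
Proof.
  intros Hc HY. pose proof (pos_INR n). set (m := INR n + 1).
  assert (Hm : 0 < m) by (unfold m; lra).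
  replace Y with ((m / c) * (c * Y / m)) at 1 by (field; lra).
  rewrite Rpow_mult_distr. apply Rmult_le_compat_l. apply pow_le. left; apply Rdiv_lt_0_compat; lra.
  eapply Rle_trans. apply pow_exp_bound. apply Rmult_le_pos. nra. left; apply Rinv_0_lt_compat; lra.
  apply exp_le. replace (INR n * (c * Y / m)) with ((c * Y) * (INR n / m)) by (field; lra).
  rewrite <- (Rmult_1_r (c * Y)) at 2. apply Rmult_le_compat_l. nra.
  unfold Rdiv. apply (Rmult_le_reg_r m). auto. rewrite Rmult_assoc, Rinv_l by lra. unfold m; lra.
Qed.

Theorem corollary1p2 (eps q sigma : R) :
  0 < eps -> 0 < q < 1 ->
  exists C0 V0 : R, 0 < C0 /\ 0 < V0 /\
    forall v : R, V0 <= Rabs v ->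
      (exists delta : R, eps < delta /\
         forall r : Z, (-1 <= r)%Z ->
           delta <= Cmod (1 - qpow q (RtoC (IZR r) + (sigma, v)))%C) ->
      (1 < sigma -> Cmod (zeta_q q (sigma, v)) <= C0) /\
      (sigma = 1 -> Cmod (zeta_q q (sigma, v)) <= C0 * Rabs v) /\
      (sigma < 1 -> Cmod (zeta_q q (sigma, v)) <=
                      C0 * exp (- (sigma - 1) * (1 + PI / 2) * Rabs v)).
Proof.
  intros Heps Hq.
  set (P := Rpower (1 - q) sigma).
  assert (HP : 0 < P) by (unfold P, Rpower; apply exp_pos).
  destruct (Rtotal_order sigma 1) as [Hlt | [Heq | Hgt]].
  -
    set (n0 := Z.to_nat (up (1 - sigma))).
    destruct (archimed (1 - sigma)) as [Hup _].
    assert (Hup0 : (0 < up (1 - sigma))%Z) by (apply lt_0_IZR; lra).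
    assert (HN : INR n0 = IZR (up (1 - sigma))).
    { unfold n0. rewrite INR_IZR_INZ, Z2Nat.id by lia. reflexivity. }
    assert (Hn : 0 < sigma - 1 + INR n0) by (rewrite HN; lra).
    set (c := (1 - sigma) * (1 + PI / 2)).
    assert (Hc : 0 < c) by (unfold c; pose proof PI_RGT_0; apply Rmult_lt_0_compat; lra).
    destruct (K_nonneg q sigma n0 eps Hq Heps Hn) as [HK1 HK2].
    set (K1' := K1 q sigma n0 eps * ((INR n0 + 1) / c) ^ n0 * exp (c * (Rabs sigma + INR n0))).
    assert (HK1' : 0 <= K1').
    { unfold K1'. apply Rmult_le_pos. apply Rmult_le_pos; auto. apply pow_le.
      pose proof (pos_INR n0). left; apply Rdiv_lt_0_compat; lra. left; apply exp_pos. }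
    exists (P * (K1' + K2 q sigma n0) + 1), 1. split. nra. split. lra.
    intros v Hv [delta [Hd Hyp]]. split; [intros; lra|]. split; [intros; lra|]. intros _.
    eapply Rle_trans. apply (core2 q sigma v n0 eps delta Hq Hv ltac:(lra) Hn Hyp).
    replace (- (sigma - 1) * (1 + PI / 2) * Rabs v) with (c * Rabs v) by (unfold c; ring).
    assert (HY := poly_exp c (Rabs sigma + INR n0 + Rabs v) n0 Hc ltac:(pose proof (pos_INR n0); pose proof (Rabs_pos sigma); pose proof (Rabs_pos v); lra)).
    assert (He1 : 1 <= exp (c * Rabs v)).
    { rewrite <- exp_0. apply exp_le. pose proof (Rabs_pos v). nra. }
    replace (exp (c * (Rabs sigma + INR n0 + Rabs v))) with (exp (c * (Rabs sigma + INR n0)) * exp (c * Rabs v)) in HY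
      by (rewrite <- exp_plus; f_equal; ring).
    apply Rle_trans with (P * (K1' * exp (c * Rabs v) + K2 q sigma n0)).
    + apply Rmult_le_compat_l. lra. apply Rplus_le_compat_r. unfold K1'.
      eapply Rle_trans. apply Rmult_le_compat_l. auto. exact HY. right; ring.
    + assert (0 < exp (c * Rabs v)) by apply exp_pos.
      assert (0 <= P * K2 q sigma n0) by nra.
      assert (P * K2 q sigma n0 * 1 <= P * K2 q sigma n0 * exp (c * Rabs v)) by (apply Rmult_le_compat_l; lra).
      nra.
  -
    subst sigma.
    assert (Hn : 0 < 1 - 1 + INR 1) by (simpl; lra).
    destruct (K_nonneg q 1 1 eps Hq Heps Hn) as [HK1 HK2].
    exists (P * (3 * K1 q 1 1 eps + K2 q 1 1) + 1), 1. split. nra. split. lra.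
    intros v Hv [delta [Hd Hyp]]. split; [intros; lra|]. split; [|intros; lra]. intros _.
    eapply Rle_trans. apply (core2 q 1 v 1 eps delta Hq Hv ltac:(lra) Hn Hyp).
    rewrite Rabs_R1. simpl pow. simpl INR.
    apply Rle_trans with (P * (3 * K1 q 1 1 eps + K2 q 1 1) * Rabs v).
    + rewrite Rmult_assoc. apply Rmult_le_compat_l. lra. nra.
    + nra.
  -
    assert (Hn : 0 < sigma - 1 + INR 0) by (simpl; lra).
    destruct (K_nonneg q sigma 0 eps Hq Heps Hn) as [HK1 HK2].
    exists (P * (K1 q sigma 0 eps + K2 q sigma 0) + 1), 1. split. nra. split. lra.
    intros v Hv [delta [Hd Hyp]]. split; [|split; intros; lra]. intros _.
    eapply Rle_trans. apply (core2 q sigma v 0 eps delta Hq Hv ltac:(lra) Hn Hyp).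
    simpl pow. fold P. lra.
Qed.
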